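(* Let $T$ be a positive integer, $(\Omega,\mathcal{F},P)$ a probability space, and $\mathbb{F}=(\mathcal{F}_t)_{t=0}^T$, $\mathbb{G}=(\mathcal{G}_t)_{t=0}^T$ two filtrations with $\mathcal{G}_t\subseteq\mathcal{F}_t$ for every $t$. Let $X^2,Y^2$ be real-valued processes $(X^2_t)_{t=0}^T$, $(Y^2_t)_{t=0}^T$ adapted to $\mathbb{G}$ with $E\left(\max_{0\le t\le T}|X^2_t|\right)<\infty$ and $E\left(\max_{0\le t\le T}|Y^2_t|\right)<\infty$. Let $\tau\in\mathcal{T}(\mathbb{F})$ and let $t\in\{0,1,\dots,T-1\}$. Then there exists $\hat{\nu}_t\in\mathcal{T}_t(\mathbb{G})$ such that, $P$-a.s., \begin{align*} &E\left[X^2_{\hat{\nu}_t}\mathbf{1}_{\{\hat{\nu}_t<\tau\}}+Y^2_{\tau}\mathbf{1}_{\{\tau\leq\hat{\nu}_t\}}\,\big|\,\mathcal{G}_t^\tau\right]=\operatorname{ess\,sup}_{\nu\in\mathcal{T}_t(\mathbb{G}^\tau)}E\left[X^2_\nu\mathbf{1}_{\{\nu<\tau\}}+Y^2_{\tau}\mathbf{1}_{\{\tau\leq\nu\}}\,\big|\,\mathcal{G}_t^\tau\right]\\ &=Y^2_\tau\mathbf{1}_{\{\tau\leq t\}}+\mathbf{1}_{\{\tau>t\}}\operatorname{ess\,sup}_{\nu\in\mathcal{T}_t(\mathbb{G})}E_{P|\{\tau>t\}}\left[X^2_\nu\mathbf{1}_{\{\nu<\tau\}}+Y^2_\tau\mathbf{1}_{\{\tau\leq\nu\}}\,\big|\,\mathcal{G}_t\right].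 \end{align*}
   Context: Time is discrete, taking values in $\{0,1,\dots,T\}$. For a filtration $\mathbb{H}$, $\mathcal{T}(\mathbb{H})$ denotes the set of $\mathbb{H}$-stopping times with values in $\{0,\dots,T\}$, and $\mathcal{T}_t(\mathbb{H})$ the set of $\mathbb{H}$-stopping times $\nu$ with $P(t\le\nu\le T)=1$. For $\tau\in\mathcal{T}(\mathbb{F})$, the filtration $\mathbb{G}^\tau=(\mathcal{G}^\tau_t)_{t=0}^T$ is defined by $\mathcal{G}_t^\tau=\mathcal{G}_t\vee\sigma\{\mathbf{1}_{\{\tau\le s\}};0\le s\le t\}$. $E_{P|\{\tau>t\}}[\,\cdot\,|\mathcal{G}_t]$ denotes conditional expectation given $\mathcal{G}_t$ under the conditional probability measure $P(\cdot\mid\tau>t)$; when $P(\tau>t)=0$ the term multiplied by $\mathbf{1}_{\{\tau>t\}}$ is understood to vanish. *)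

(* Defs.v *)
From HB Require Import structures.
From mathcomp Require Import all_boot all_order all_algebra.
From mathcomp Require Import all_classical all_reals all_analysis.
From mathcomp Require Import measurable_realfun.
Set Implicit Arguments. Unset Strict Implicit. Unset Printing Implicit Defensive.
Import Order.TTheory GRing.Theory Num.Theory.
Local Open Scope classical_set_scope.
Local Open Scope ring_scope.

Section Defs.
Context {d : measure_display} {Omega : measurableType d} {R : realType}.

Definition sub_sigma (G : set (set Omega)) : Prop :=
  sigma_algebra setT G /\ G `<=` measurable.

Definition filtration (T : nat) (F : nat -> set (set Omega)) : Prop :=
  (forall t, (t <= T)%N -> sub_sigma (F t)) /\
  (forall s t, (s <= t)%N -> (t <= T)%N -> F s `<=` F t).

Definition G_measurable (G : set (set Omega)) (f : Omega -> R) : Prop :=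
  forall B : set R, measurable B -> G (f @^-1` B).

Definition adapted (T : nat) (H : nat -> set (set Omega)) (X : nat -> Omega -> R) :=
  forall t, (t <= T)%N -> G_measurable (H t) (X t).

Definition stopping_time (T : nat) (H : nat -> set (set Omega)) (nu : Omega -> nat) :=
  (forall w, (nu w <= T)%N) /\ (forall s, (s <= T)%N -> H s [set w | (nu w <= s)%N]).

Definition stopping_time_from (P : probability Omega R) (T : nat)
    (H : nat -> set (set Omega)) (t : nat) (nu : Omega -> nat) :=
  stopping_time T H nu /\ {ae P, forall w, (t <= nu w)%N}.

Definition progressive_enlargement (G : nat -> set (set Omega)) (tau : Omega -> nat)
    (t : nat) : set (set Omega) :=
  <<s G t `|` [set [set w | (tau w <= s)%N] | s in [set s | (s <= t)%N]] >>.

(* W is a version of E_{P(.|B)}[Z | G] (for B = setT, of E_P[Z | G]):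
   W is G-measurable, integrable on B, and int_{A /\ B} W dP = int_{A /\ B} Z dP
   for every A in G.  (Multiplying both sides by 1/P(B) this is exactly the
   defining property of the conditional expectation under P(. | B) when
   P(B) > 0; versions under P(.|B) are determined P-a.s. on B only.) *)
Definition cond_exp_on (P : probability Omega R) (B : set Omega)
    (G : set (set Omega)) (Z W : Omega -> R) : Prop :=
  G_measurable G W /\ P.-integrable B (EFin \o W) /\
  forall A, G A ->
    (\int[P]_(x in A `&` B) (W x)%:E = \int[P]_(x in A `&` B) (Z x)%:E)%E.

(* Z is an essential supremum (w.r.t. P(.|B), i.e. P-a.s. on B) of the
   family S of extended-real random variables: Z is measurable, dominates
   every member of S a.s. on B, and is a.s. on B below every measurable
   a.s.-upper bound of S. *)
Definition ess_sup_on (P : probability Omega R) (B : set Omega)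
    (S : set (Omega -> \bar R)) (Z : Omega -> \bar R) : Prop :=
  measurable_fun [set: Omega] (Z : Omega -> \bar R) /\
  (forall V, S V -> {ae P, forall w, B w -> (V w <= Z w)%E}) /\
  (forall Z' : Omega -> \bar R, measurable_fun [set: Omega] Z' ->
     (forall V, S V -> {ae P, forall w, B w -> (V w <= Z' w)%E}) ->
     {ae P, forall w, B w -> (Z w <= Z' w)%E}).

Definition payoff (X Y : nat -> Omega -> R) (tau nu : Omega -> nat) : Omega -> R :=
  fun w => X (nu w) w * ((nu w < tau w)%N)%:R + Y (tau w) w * ((tau w <= nu w)%N)%:R.

Definition maxabs (T : nat) (X : nat -> Omega -> R) : Omega -> R :=
  fun w => \big[Num.max/0]_(i < T.+1) `|X i w|.

End Defs.

(* Main.v *)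
Require Import Defs.
From HB Require Import structures.
From mathcomp Require Import all_boot all_order all_algebra.
From mathcomp Require Import all_classical all_reals all_analysis.
From mathcomp Require Import measurable_realfun.
Set Implicit Arguments. Unset Strict Implicit. Unset Printing Implicit Defensive.
Import Order.TTheory GRing.Theory Num.Theory.
Import numFieldNormedType.Exports.
Local Open Scope classical_set_scope.
Local Open Scope ring_scope.

Section hahn_sub.
Context d (Omega : measurableType d) (R : realType) (P : probability Omega R).
Variables (H : set (set Omega)) (f : Omega -> R).
Hypotheses (sH : sigma_algebra setT H) (HM : H `<=` measurable)
  (intf : P.-integrable setT (EFin \o f)).

Let Hty := g_sigma_algebraType H.
Let mHE : (measurable : set (set Hty)) = H.
Proof. exact: measurable_g_measurableTypeE. Qed.

Definition hnu (A : set Hty) : \bar R := (\int[P]_(x in A) (f x)%:E)%E.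

Let hnu0 : hnu set0 = 0%E.
Proof. by rewrite /hnu integral_set0. Qed.

Let hnufin (A : set Hty) : measurable A -> hnu A \is a fin_num.
Proof.
rewrite mHE => /HM mA; apply: integrable_fin_num => //.
exact: integrableS intf.
Qed.

Let hnusigma : semi_sigma_additive hnu.
Proof.
move=> F mF tF mU.
have := @charge_semi_sigma_additive _ _ _ (induced_charge intf) F.
apply.
- by move=> i; apply: HM; rewrite -mHE; exact: mF.
- exact: tF.
- by apply: HM; rewrite -mHE.
Qed.

HB.instance Definition _ := isCharge.Build _ Hty R hnu hnu0 hnufin hnusigma.

Lemma hahn_sub : exists D, H D /\
  (forall A, H A -> A `<=` D -> (0 <= \int[P]_(x in A) (f x)%:E)%E) /\
  (forall A, H A -> A `<=` ~` D -> (\int[P]_(x in A) (f x)%:E <= 0)%E).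
Proof.
have [Pp [Nn [[mP posP] [mN negN] PN PN0]]] := Hahn_decomposition hnu.
exists Pp; split; first by rewrite -mHE.
split.
- by move=> A HA AP; apply: (posP A) => //; rewrite mHE.
- move=> A HA AN; apply: (negN A); first by rewrite mHE.
  move=> x Ax; have := AN x Ax.
  have : (Pp `|` Nn) x by rewrite PN.
  by case.
Qed.

End hahn_sub.


Section basics.
Context d (Omega : measurableType d) (R : realType).

Lemma GmP (H : set (set Omega)) (f : Omega -> R) : sigma_algebra setT H ->
  G_measurable H f <->
  @measurable_fun _ _ (g_sigma_algebraType H) R setT f.
Proof.
move=> sH; split.
- move=> Hf _ Y mY; rewrite setTI.
  by rewrite (measurable_g_measurableTypeE sH); exact: Hf.
- move=> mf Y mY; have := mf (@measurableT _ (g_sigma_algebraType H)) Y mY.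
  by rewrite setTI (measurable_g_measurableTypeE sH).
Qed.

Lemma Gm_meas (H : set (set Omega)) (f : Omega -> R) :
  H `<=` measurable -> G_measurable H f -> measurable_fun setT f.
Proof. by move=> HM Hf _ Y mY; rewrite setTI; apply: HM; exact: Hf. Qed.

Lemma Gm_lt (H : set (set Omega)) (f g : Omega -> R) : sigma_algebra setT H ->
  G_measurable H f -> G_measurable H g -> H [set w | f w < g w].
Proof.
move=> sH /(GmP _ sH) mf /(GmP _ sH) mg.
have := @measurable_funB _ (g_sigma_algebraType H) R setT g f mg mf.
move=> /(_ (@measurableT _ (g_sigma_algebraType H)) _ (@measurable_itv R `]0, +oo[)).
rewrite setTI (measurable_g_measurableTypeE sH).
congr H; apply/seteqP; split => w /=; rewrite in_itv/= andbT subr_gt0 //.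
Qed.

Lemma Gm_sub (H1 H2 : set (set Omega)) (f : Omega -> R) :
  H1 `<=` H2 -> G_measurable H1 f -> G_measurable H2 f.
Proof. by move=> H12 Hf Y mY; apply: H12; exact: Hf. Qed.

End basics.


Section uniq.
Context d (Omega : measurableType d) (R : realType) (P : probability Omega R).


Lemma uniq_le (H : set (set Omega)) (C : set Omega) (f g : Omega -> R) :
  sigma_algebra setT H -> H `<=` measurable -> measurable C ->
  G_measurable H f -> G_measurable H g ->
  P.-integrable C (EFin \o f) -> P.-integrable C (EFin \o g) ->
  (forall A, H A -> (\int[P]_(x in A `&` C) (f x)%:E <= \int[P]_(x in A `&` C) (g x)%:E)%E) ->
  {ae P, forall w, C w -> f w <= g w}.
Proof.
move=> sH HM mC Hf Hg intf intg hyp.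
have HE := Gm_lt sH Hg Hf.
set E := [set w | g w < f w] in HE.
have mD : measurable (E `&` C) by apply: measurableI => //; exact: HM.
have intfD : P.-integrable (E `&` C) (EFin \o f) by apply: integrableS intf.
have intgD : P.-integrable (E `&` C) (EFin \o g) by apply: integrableS intg.
have h1 : (\int[P]_(x in E `&` C) ((f x)%:E - (g x)%:E) <= 0)%E.
  by rewrite integralB_EFin // sube_le0; exact: hyp.
have h2 : (0 <= \int[P]_(x in E `&` C) ((f x)%:E - (g x)%:E))%E.
  apply: integral_ge0 => x [Ex Cx]; rewrite -EFinB lee_fin subr_ge0.
  by apply: ltW.
have h0 : (\int[P]_(x in E `&` C) `|((f x - g x)%:E)| = 0)%E.
  apply/eqP; rewrite eq_le; apply/andP; split; last exact: integral_ge0.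
  rewrite (le_trans _ h1)// le_eqVlt; apply/orP; left; apply/eqP.
  apply: eq_integral => x /set_mem [Ex Cx]; rewrite gee0_abs ?EFinB//.
  by rewrite lee_fin subr_ge0 ltW.
have mfg : measurable_fun (E `&` C) (EFin \o (f \- g)).
  apply/measurable_EFinP; apply: measurable_funB.
  - by apply/measurable_EFinP; exact: (measurable_int _ intfD).
  - by apply/measurable_EFinP; exact: (measurable_int _ intgD).
have := (ae_eq_integral_abs P mD mfg).1 h0.
apply: filterS => w /= hw Cw; rewrite leNgt; apply/negP => gf.
have := hw (conj gf Cw); rewrite /cst => /eqP; rewrite eqe subr_eq0 => /eqP fg.
by move: gf; rewrite fg ltxx.
Qed.

End uniq.


Section sa.
Context (Omega : pointedType) (K : set (set Omega)) (sK : sigma_algebra setT K).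

Let mE : (measurable : set (set (g_sigma_algebraType K))) = K.
Proof. exact: measurable_g_measurableTypeE. Qed.

Lemma saD A B : K A -> K B -> K (A `\` B).
Proof. rewrite -mE; exact: measurableD. Qed.
Lemma saI A B : K A -> K B -> K (A `&` B).
Proof. rewrite -mE; exact: measurableI. Qed.
Lemma saU A B : K A -> K B -> K (A `|` B).
Proof. rewrite -mE; exact: measurableU. Qed.
Lemma saC A : K A -> K (~` A).
Proof. rewrite -mE; exact: measurableC. Qed.
Lemma saT : K setT.
Proof. rewrite -mE; exact: measurableT. Qed.
Lemma sa0 : K set0.
Proof. rewrite -mE; exact: measurable0. Qed.
Lemma saUn (F : nat -> set Omega) : (forall n, K (F n)) -> K (\bigcup_n F n).
Proof. by case: sK => _ _; apply. Qed.

Lemma sa_eq (nu : Omega -> nat) s :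
  (forall r, (r <= s)%N -> K [set w | (nu w <= r)%N]) ->
  forall r, (r <= s)%N -> K [set w | nu w = r].
Proof.
move=> h [|r] rs.
  rewrite (_ : [set w | _] = [set w | (nu w <= 0)%N]); first exact: h.
  by apply/seteqP; split => w /=; [move->|rewrite leqn0 => /eqP].
rewrite (_ : [set w | _] = [set w | (nu w <= r.+1)%N] `\` [set w | (nu w <= r)%N]).
  by apply: saD; apply: h => //; exact: ltnW.
apply/seteqP; split => w /=; first by move->; rewrite leqnn ltnn.
by move=> [] h1 /negP; rewrite -ltnNge => h2; apply/eqP; rewrite eqn_leq h1 h2.
Qed.

End sa.

Section piece.
Context d (Omega : measurableType d) (R : realType).

Lemma Gm_piece (K : set (set Omega)) (nu : Omega -> nat) (g : nat -> Omega -> R)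
    (f : Omega -> R) : sigma_algebra setT K ->
  (forall w, f w = g (nu w) w) ->
  (forall s (Y : set R), measurable Y -> K ([set w | nu w = s] `&` g s @^-1` Y)) ->
  G_measurable K f.
Proof.
move=> sK fE hg Y mY.
rewrite (_ : f @^-1` Y = \bigcup_s ([set w | nu w = s] `&` g s @^-1` Y)).
  by apply: saUn => // s; exact: hg.
apply/seteqP; split => w /=.
  by rewrite fE => Yw; exists (nu w).
by move=> [s _ [/= <-]]; rewrite /preimage/= fE.
Qed.

Lemma st_eq_meas T (H : nat -> set (set Omega)) (nu : Omega -> nat) :
  filtration T H -> stopping_time T H nu -> forall s, measurable [set w | nu w = s].
Proof.
move=> [hH _] [nuT hnu] s.
have [sT|sT] := leqP s T.
  apply: (@sa_eq _ _ (@sigma_algebra_measurable _ Omega) nu T) => // r rT.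
  by have [_ HM] := hH r rT; apply: HM; exact: hnu.
rewrite (_ : [set w | _] = set0) //; apply/seteqP; split => w //= nuw.
by move: (nuT w); rewrite nuw leqNgt sT.
Qed.

End piece.

Section piece2.
Context d (Omega : measurableType d) (R : realType).
Lemma Gm_pieceT (K : set (set Omega)) T (nu : Omega -> nat) (g : nat -> Omega -> R)
    (f : Omega -> R) : sigma_algebra setT K -> (forall w, (nu w <= T)%N) ->
  (forall w, f w = g (nu w) w) ->
  (forall s (Y : set R), (s <= T)%N -> measurable Y ->
     K ([set w | nu w = s] `&` g s @^-1` Y)) ->
  G_measurable K f.
Proof.
move=> sK nuT fE hg; apply: (Gm_piece sK fE) => s Y mY.
have [sT|sT] := leqP s T; first exact: hg.
rewrite (_ : _ `&` _ = set0); first exact: sa0.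
apply/seteqP; split => w //= [nuw _]; move: (nuT w); rewrite nuw leqNgt sT //.
Qed.

Lemma meas_pieceT T (nu : Omega -> nat) (g : nat -> Omega -> R) (f : Omega -> R) :
  (forall w, (nu w <= T)%N) -> (forall s, measurable [set w | nu w = s]) ->
  (forall w, f w = g (nu w) w) ->
  (forall s, (s <= T)%N -> measurable_fun setT (g s)) ->
  measurable_fun setT f.
Proof.
move=> nuT mnu fE mg.
suff : G_measurable measurable f.
  by move=> Hf _ Y mY; rewrite setTI; exact: Hf.
apply: (Gm_pieceT (@sigma_algebra_measurable _ Omega) nuT fE) => s Y sT mY.
apply: measurableI => //; rewrite -[_ @^-1` _]setTI; exact: mg.
Qed.

Lemma payoff_meas T (X Y : nat -> Omega -> R) (tau nu : Omega -> nat) :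
  (forall w, (tau w <= T)%N) -> (forall s, measurable [set w | tau w = s]) ->
  (forall w, (nu w <= T)%N) -> (forall s, measurable [set w | nu w = s]) ->
  (forall s, (s <= T)%N -> measurable_fun setT (X s)) ->
  (forall s, (s <= T)%N -> measurable_fun setT (Y s)) ->
  measurable_fun setT (payoff X Y tau nu).
Proof.
move=> tauT mtau nuT mnu mX mY.
pose Z s w := X s w * ((s < tau w)%N)%:R + Y (tau w) w * ((tau w <= s)%N)%:R.
apply: (@meas_pieceT T nu Z) => // s sT.
pose g r w := X s w * ((s < r)%N)%:R + Y r w * ((r <= s)%N)%:R.
apply: (@meas_pieceT T tau g) => // r rT.
apply: measurable_funD; apply: measurable_funM => //; [exact: mX|exact: mY].
Qed.

Lemma maxabs_ge T (X : nat -> Omega -> R) s w : (s <= T)%N -> `|X s w| <= maxabs T X w.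
Proof.
move=> sT; rewrite /maxabs.
have := @le_bigmax _ R _ 0 (fun i : 'I_T.+1 => `|X i w|) (Ordinal (sT : (s < T.+1)%N)).
by [].
Qed.

Lemma maxabs_ge0 T (X : nat -> Omega -> R) w : 0 <= maxabs T X w.
Proof. by apply: le_trans (maxabs_ge X w (leq0n T)). Qed.

Lemma payoff_le T (X Y : nat -> Omega -> R) (tau nu : Omega -> nat) w :
  (tau w <= T)%N -> (nu w <= T)%N ->
  `|payoff X Y tau nu w| <= maxabs T X w + maxabs T Y w.
Proof.
move=> tT nT; rewrite /payoff.
case: ltnP => h.
  rewrite mulr1 mulr0 addr0; apply: le_trans (maxabs_ge X w nT) _.
  by rewrite lerDl maxabs_ge0.
rewrite mulr0 mulr1 add0r; apply: le_trans (maxabs_ge Y w tT) _.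
by rewrite lerDr maxabs_ge0.
Qed.

End piece2.


Section Ig.
Context d (Omega : measurableType d) (R : realType) (P : probability Omega R).

Definition Ig (A : set Omega) (g : Omega -> R) : R :=
  fine (\int[P]_(x in A) (g x)%:E)%E.

Definition Pint (g : Omega -> R) := P.-integrable setT (EFin \o g).

Lemma IgE A g : measurable A -> Pint g -> (\int[P]_(x in A) (g x)%:E)%E = (Ig A g)%:E.
Proof.
move=> mA ig; rewrite /Ig fineK//; apply: integrable_fin_num => //.
exact: integrableS ig.
Qed.

Lemma Ig_split A B g : measurable A -> measurable B -> Pint g ->
  Ig A g = Ig (A `&` B) g + Ig (A `\` B) g.
Proof.
move=> mA mB ig.
have mAB : measurable (A `&` B) by exact: measurableI.
have mADB : measurable (A `\` B) by exact: measurableD.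
apply: EFin_inj; rewrite EFinD -!IgE//.
rewrite -integral_setU//; first by rewrite setUIDK.
- apply: measurable_funS (measurable_int _ ig) => //.
- rewrite disj_set2E; apply/eqP/seteqP; split => x // [[_ ?] [_ ?]].
all: by [].
Qed.

Lemma Ig_ext A g1 g2 : (forall x, A x -> g1 x = g2 x) -> Ig A g1 = Ig A g2.
Proof.
by move=> h; rewrite /Ig; congr fine; apply: eq_integral => x /set_mem Ax; rewrite h.
Qed.

Lemma Pint_B g1 g2 : Pint g1 -> Pint g2 -> Pint (g1 \- g2).
Proof.
move=> i1 i2; rewrite /Pint (_ : EFin \o (g1 \- g2)%R = ((EFin \o g1) \- (EFin \o g2))%E).
  exact: integrableB.
by apply/funext => x /=; rewrite EFinB.
Qed.

Lemma Ig_B A g1 g2 : measurable A -> Pint g1 -> Pint g2 ->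
  Ig A (g1 \- g2) = Ig A g1 - Ig A g2.
Proof.
move=> mA i1 i2; apply: EFin_inj; rewrite EFinB -!IgE//; last exact: Pint_B.
rewrite -integralB_EFin//; [exact: integrableS i1|exact: integrableS i2].
Qed.

Lemma Ig_le A g1 g2 : measurable A -> Pint g1 -> Pint g2 ->
  (forall x, A x -> g1 x <= g2 x) -> Ig A g1 <= Ig A g2.
Proof.
move=> mA i1 i2 h; rewrite -lee_fin -!IgE//.
apply: le_integral => //; [exact: integrableS i1|exact: integrableS i2|].
by move=> x /set_mem Ax; rewrite lee_fin h.
Qed.

End Ig.


Section PE.
Context d (Omega : measurableType d) (R : realType).
Variables (G : nat -> set (set Omega)) (tau : Omega -> nat).

Lemma PE_sa s : sigma_algebra setT (progressive_enlargement G tau s).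
Proof. exact: smallest_sigma_algebra. Qed.

Lemma PE_G s : G s `<=` progressive_enlargement G tau s.
Proof. by move=> A GA; apply: sub_sigma_algebra; left. Qed.

Lemma PE_tau s r : (r <= s)%N -> progressive_enlargement G tau s [set w | (tau w <= r)%N].
Proof. by move=> rs; apply: sub_sigma_algebra; right; exists r. Qed.

Lemma PE_struct s : sigma_algebra setT (G s) ->
  forall C, progressive_enlargement G tau s C ->
  exists A, G s A /\ C `&` [set w | (s < tau w)%N] = A `&` [set w | (s < tau w)%N].
Proof.
move=> sG; set B := [set w | (s < tau w)%N].
apply: smallest_sub.
- split.
  + by exists set0; split => //; case: sG.
  + move=> C [A [GA CA]]; exists (setT `\` A); split; first by case: sG => _ + _; apply.
    have hCA w : B w -> (C w <-> A w).
      move=> Bw; split => h.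
        by have [] : (A `&` B) w by rewrite -CA.
      by have [] : (C `&` B) w by rewrite CA.
    apply/seteqP; split => w [[_ h1] h2]; split => //; split => // h3; apply: h1.
      by apply/(hCA w h2).
    by apply/(hCA w h2).
  + move=> Cn hC.
    have [An hA] := choice hC.
    exists (\bigcup_n An n); split; first by case: sG => _ _; apply => n; case: (hA n).
    by rewrite !setI_bigcupl; apply: eq_bigcupr => n _; case: (hA n).
- move=> C [GC|[r /= rs <-]].
  + by exists C.
  + exists set0; split; first by case: sG.
    rewrite set0I; apply/seteqP; split => w // [/= h1 h2].
    by move: (leq_ltn_trans h1 (leq_ltn_trans rs h2)); rewrite ltnn.
Qed.

Lemma PE_mono s s' : (s <= s')%N -> G s `<=` G s' ->
  progressive_enlargement G tau s `<=` progressive_enlargement G tau s'.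
Proof.
move=> ss' GG; apply: sub_sigma_algebra2 => A [GA|[r /= rs <-]].
  by left; exact: GG.
by right; exists r => //=; exact: leq_trans ss'.
Qed.

Lemma PE_meas s : (forall r, (r <= s)%N -> measurable [set w | (tau w <= r)%N]) ->
  G s `<=` measurable -> progressive_enlargement G tau s `<=` measurable.
Proof.
move=> mtau GM; apply: smallest_sub; first exact: sigma_algebra_measurable.
by move=> A [GA|[r /= rs <-]]; [exact: GM|exact: mtau].
Qed.

End PE.

From mathcomp Require Import lra.

Section main.
Context d (Omega : measurableType d) (R : realType) (P : probability Omega R).
Variables (T : nat) (F G : nat -> set (set Omega)) (X Y : nat -> Omega -> R)
  (tau : Omega -> nat).
Hypotheses (hF : filtration T F) (hG : filtration T G)
  (GF : forall s, (s <= T)%N -> G s `<=` F s)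
  (aX : adapted T G X) (aY : adapted T G Y)
  (iX : Pint P (maxabs T X)) (iY : Pint P (maxabs T Y))
  (stau : stopping_time T F tau).

Lemma sGs s : (s <= T)%N -> sigma_algebra setT (G s).
Proof. by move=> sT; have [+ _] := hG; move=> /(_ s sT) []. Qed.

Lemma GM s : (s <= T)%N -> G s `<=` measurable.
Proof. by move=> sT; have [+ _] := hG; move=> /(_ s sT) []. Qed.

Lemma mX s : (s <= T)%N -> measurable_fun setT (X s).
Proof. by move=> sT; apply: Gm_meas (GM sT) (aX sT). Qed.

Lemma mY s : (s <= T)%N -> measurable_fun setT (Y s).
Proof. by move=> sT; apply: Gm_meas (GM sT) (aY sT). Qed.

Lemma tauT w : (tau w <= T)%N.
Proof. by case: stau. Qed.

Lemma mtau s : measurable [set w | tau w = s].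
Proof. exact: st_eq_meas hF stau s. Qed.

Lemma pay_int (nu : Omega -> nat) : (forall w, (nu w <= T)%N) ->
  (forall s, measurable [set w | nu w = s]) -> Pint P (payoff X Y tau nu).
Proof.
move=> nuT mnu.
have iXY : Pint P (maxabs T X \+ maxabs T Y).
  rewrite /Pint (_ : EFin \o (maxabs T X \+ maxabs T Y)%R =
     ((EFin \o maxabs T X) \+ (EFin \o maxabs T Y))%E).
    exact: integrableD.
  by apply/funext => x /=; rewrite EFinD.
apply: (le_integrable measurableT _ _ iXY).
  apply/measurable_EFinP; apply: payoff_meas => //.
  - exact: tauT.
  - exact: mtau.
  - exact: mX.
  - exact: mY.
move=> w _ /=; rewrite lee_fin.
have h1 := maxabs_ge0 T X w; have h2 := maxabs_ge0 T Y w.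
rewrite (@ger0_norm _ (maxabs T X w + maxabs T Y w)); last by apply: addr_ge0.
exact: payoff_le (tauT w) (nuT w).
Qed.

Lemma cst_meas (c s : nat) : measurable [set w : Omega | c = s].
Proof.
have [->|ne] := eqVneq c s.
  by rewrite (_ : [set w | _] = setT) //; apply/seteqP; split.
rewrite (_ : [set w | _] = set0) //; apply/seteqP; split => w //= e.
by move: ne; rewrite e eqxx.
Qed.

Lemma st_meas nu : stopping_time T G nu -> forall s, measurable [set w | nu w = s].
Proof. exact: st_eq_meas hG. Qed.

Lemma st_int nu : stopping_time T G nu -> Pint P (payoff X Y tau nu).
Proof. by move=> hnu; apply: pay_int; [case: hnu|exact: st_meas]. Qed.

Definition good s (nu : Omega -> nat) := stopping_time T G nu /\ forall w, (s <= nu w)%N.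

Definition OPT s nu := forall mu, good s mu -> forall A, G s A ->
  Ig P A (payoff X Y tau mu) <= Ig P A (payoff X Y tau nu).

Lemma backward k : (k <= T)%N -> exists nu, good (T - k) nu /\ OPT (T - k) nu.
Proof.
elim: k => [_|k IH kT].
  rewrite subn0; exists (fun _ => T); split.
    split; last by [].
    split => // r rT.
    have [Tr|rT'] := leqP T r.
      rewrite (_ : [set w | _] = setT); first exact: saT (sGs rT).
      by apply/seteqP; split => w //=.
    rewrite (_ : [set w | _] = set0); first exact: sa0 (sGs rT).
    by apply/seteqP; split => w //=; rewrite leqNgt rT'.
  move=> mu [[muT _] Tmu] A GA; rewrite le_eqVlt; apply/orP; left; apply/eqP.
  apply: Ig_ext => x _; rewrite /payoff.
  by have -> : mu x = T by apply/eqP; rewrite eqn_leq muT Tmu.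
have [nu' [[snu' gnu'] Onu']] := IH (ltnW kT).
set s := (T - k.+1)%N.
have sk : (T - k)%N = s.+1 by rewrite /s subnSK.
rewrite sk in gnu' Onu'.
have sT : (s <= T)%N by rewrite /s leq_subr.
have s1T : (s.+1 <= T)%N by rewrite -sk leq_subr.
pose Z := payoff X Y tau (fun _ => s).
have iZ : Pint P Z by apply: pay_int => // r; exact: cst_meas.
have inu' := st_int snu'.
have ih' := Pint_B iZ inu'.
have [D [GD [posD negD]]] := @hahn_sub _ _ _ P _ _ (sGs sT) (GM sT) ih'.
pose nu := fun w => if pselect (D w) then s else nu' w.
have nuD w : D w -> nu w = s by rewrite /nu; case: (pselect (D w)).
have nunD w : ~ D w -> nu w = nu' w by rewrite /nu; case: (pselect (D w)).
have snu : stopping_time T G nu.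
  split.
    move=> w; have [Dw|nDw] := pselect (D w); first by rewrite nuD.
    by rewrite nunD //; case: snu'.
  move=> r rT.
  have [sr|rs] := leqP s r.
    rewrite (_ : [set w | _] = D `|` [set w | (nu' w <= r)%N]).
      apply: (saU (sGs rT)).
      - by have [_ +] := hG; move=> /(_ s r sr rT); apply.
      - by case: snu' => _; apply.
    apply/seteqP; split => w /=.
      by have [Dw|nDw] := pselect (D w); [left|rewrite nunD //; right].
    case=> [Dw|hw]; first by rewrite nuD.
    by have [Dw|nDw] := pselect (D w); [rewrite nuD|rewrite nunD].
  rewrite (_ : [set w | _] = set0); first exact: sa0 (sGs rT).
  apply/seteqP; split => w //=; have [Dw|nDw] := pselect (D w).
    by rewrite nuD // leqNgt rs.
  rewrite nunD // => hw; have := leq_trans (gnu' w) hw.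
  by rewrite ltnNge (ltnW rs).
exists nu; split.
  split => // w; have [Dw|nDw] := pselect (D w); first by rewrite nuD.
  rewrite nunD //; exact: ltnW (gnu' w).
move=> mu [smu gmu] A GA.
pose mu' := fun w => maxn (mu w) s.+1.
have gmu' : good s.+1 mu'.
  split; last by move=> w; rewrite leq_maxr.
  split.
    by move=> w; rewrite geq_max s1T andbT; case: smu.
  move=> r rT.
  have [s1r|rs] := leqP s.+1 r.
    rewrite (_ : [set w | _] = [set w | (mu w <= r)%N]); first by case: smu => _; apply.
    by apply/seteqP; split => w /=; rewrite geq_max s1r andbT.
  rewrite (_ : [set w | _] = set0); first exact: sa0 (sGs rT).
  by apply/seteqP; split => w //=; rewrite geq_max [(s.+1 <= r)%N]leqNgt rs andbF.
pose E := [set w | (mu w <= s)%N].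
have GE : G s E by case: smu => _; apply.
have mA := GM sT GA; have mE := GM sT GE; have mD := GM sT GD.
have imu := st_int smu; have imu' := st_int gmu'.1; have inu := st_int snu.
have Gss : G s `<=` G s.+1 by have [_ +] := hG; move=> /(_ s s.+1 (leqnSn s) s1T).
have ih := Onu' mu' gmu' (A `\` E) (Gss _ (saD (sGs sT) GA GE)).
have e1 := Ig_split mA mE imu.
have e2 : Ig P (A `&` E) (payoff X Y tau mu) = Ig P (A `&` E) Z.
  apply: Ig_ext => x [_ Ex]; rewrite /payoff /Z.
  by have -> : mu x = s by apply/eqP; rewrite eqn_leq Ex gmu.
have e3 : Ig P (A `\` E) (payoff X Y tau mu) = Ig P (A `\` E) (payoff X Y tau mu').
  apply: Ig_ext => x [_ nEx]; rewrite /payoff /mu' (maxn_idPl _) //.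
  by move/negP: nEx; rewrite -ltnNge.
have e5 := Ig_split mA mD inu.
have e6 : Ig P (A `&` D) (payoff X Y tau nu) = Ig P (A `&` D) Z.
  by apply: Ig_ext => x [_ Dx]; rewrite /payoff /Z nuD.
have e7 : Ig P (A `\` D) (payoff X Y tau nu) = Ig P (A `\` D) (payoff X Y tau nu').
  by apply: Ig_ext => x [_ Dx]; rewrite /payoff nunD.
have e8 := Ig_split mA mE inu'.
have e9 := Ig_split mA mD inu'.
have e10 := Ig_B (measurableI _ _ mA mE) iZ inu'.
have e11 := Ig_B (measurableI _ _ mA mD) iZ inu'.
have e12 := Ig_split (measurableI _ _ mA mE) mD ih'.
have e13 := Ig_split (measurableI _ _ mA mD) mE ih'.
rewrite setIAC in e13.
have n1 : Ig P ((A `&` E) `\` D) (Z \- payoff X Y tau nu') <= 0.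
  have := negD ((A `&` E) `\` D) (saD (sGs sT) (saI (sGs sT) GA GE) GD).
  rewrite IgE //; last exact: measurableD (measurableI _ _ mA mE) mD.
  by rewrite lee_fin; apply => w [].
have p1 : 0 <= Ig P ((A `&` D) `\` E) (Z \- payoff X Y tau nu').
  have := posD ((A `&` D) `\` E) (saD (sGs sT) (saI (sGs sT) GA GD) GE).
  rewrite IgE //; last exact: measurableD (measurableI _ _ mA mD) mE.
  by rewrite lee_fin; apply => w [[]].
rewrite e1 e2 e3 e5 e6 e7.
lra.
Qed.

Lemma pay_Y (nu : Omega -> nat) w : (tau w <= nu w)%N -> payoff X Y tau nu w = Y (tau w) w.
Proof. by move=> h; rewrite /payoff ltnNge h /= mulr0 add0r mulr1. Qed.

Variables (t : nat).
Hypothesis ht : (t < T)%N.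

Local Notation Hp := (progressive_enlargement G tau).

Lemma mtau_le r : (r <= T)%N -> measurable [set w | (tau w <= r)%N].
Proof.
move=> rT; have [+ _] := hF; move=> /(_ r rT) [_ FM]; apply: FM.
by case: stau => _; apply.
Qed.

Lemma HpM s : (s <= T)%N -> Hp s `<=` measurable.
Proof.
move=> sT; apply: PE_meas; last exact: GM.
by move=> r rs; apply: mtau_le; exact: leq_trans sT.
Qed.

Lemma Hp_filt : filtration T Hp.
Proof.
split.
  by move=> s sT; split; [exact: PE_sa|exact: HpM].
move=> s s' ss' s'T; apply: PE_mono => //.
by have [_ +] := hG; apply.
Qed.

Lemma G_Hp nu : stopping_time T G nu -> stopping_time T Hp nu.
Proof. by case=> nuT hnu; split => // s sT; apply: PE_G; exact: hnu. Qed.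

Lemma Hp_int nu : stopping_time T Hp nu -> Pint P (payoff X Y tau nu).
Proof.
move=> hnu; apply: pay_int; first by case: hnu.
exact: st_eq_meas Hp_filt hnu.
Qed.

Lemma Hp_meas nu : stopping_time T Hp nu -> measurable_fun setT (payoff X Y tau nu).
Proof.
move=> hnu; apply: payoff_meas.
- exact: tauT.
- exact: mtau.
- by case: hnu.
- exact: st_eq_meas Hp_filt hnu.
- exact: mX.
- exact: mY.
Qed.

Lemma conv nu : stopping_time_from P T Hp t nu ->
  exists nu', good t nu' /\ {ae P, forall w, payoff X Y tau nu w = payoff X Y tau nu' w}.
Proof.
move=> [[nuT hnu] aenu].
have : forall r, exists A, (r <= T)%N -> G r A /\
    [set w | (nu w <= r)%N] `&` [set w | (r < tau w)%N] = A `&` [set w | (r < tau w)%N].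
  move=> r; have [rT|rT] := leqP r T; last by exists set0.
  have [A [GA eA]] := PE_struct (sGs rT) (hnu r rT).
  by exists A.
move=> /choice [An hAn].
pose Pr w k := (k == T) || [&& (t <= k)%N, (k <= T)%N & `[< An k w >]].
have exP w : exists k, Pr w k by exists T; rewrite /Pr eqxx.
pose nu' w := ex_minn (exP w).
have nu'P w k : (nu' w <= k)%N <-> exists j, (j <= k)%N /\ Pr w j.
  rewrite /nu'; case: ex_minnP => m Pm minm; split.
    by move=> mk; exists m.
  by move=> [j [jk Pj]]; apply: leq_trans (minm j Pj) jk.
have key w r : (t <= r)%N -> (r < tau w)%N -> (An r w <-> (nu w <= r)%N).
  move=> tr rtau; have rT : (r <= T)%N by apply: ltnW; apply: leq_trans rtau (tauT w).
  have [_ e] := hAn r rT; split => h.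
    by have [] : ([set w | (nu w <= r)%N] `&` [set w | (r < tau w)%N]) w by rewrite e.
  by have [] : (An r `&` [set w | (r < tau w)%N]) w by rewrite -e.
exists nu'; split.
  split.
    split.
      by move=> w; rewrite /nu'; case: ex_minnP => m Pm minm; apply: minm; rewrite /Pr eqxx.
    move=> r rT.
    have [rT'|rT'] := eqVneq r T.
      rewrite (_ : [set w | _] = setT); first exact: saT (sGs rT).
      apply/seteqP; split => w // _ /=; rewrite rT'.
      by rewrite /nu'; case: ex_minnP => m Pm minm; apply: minm; rewrite /Pr eqxx.
    rewrite (_ : [set w | _] = \bigcup_j (if (t <= j <= r)%N then An j else set0)).
      apply: (saUn (sGs rT)) => j.
      case: ifPn => [/andP[tj jr]|]; last by move=> _; exact: sa0 (sGs rT).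
      have jT := leq_trans jr rT.
      have [_ +] := hG; move=> /(_ j r jr rT); apply.
      by have [] := hAn j jT.
    apply/seteqP; split => w /=.
      move/nu'P => [j [jr /orP[/eqP jT|/and3P[tj jT /asboolP Ajw]]]].
        have rTe : r = T by apply/eqP; rewrite eqn_leq rT -jT jr.
        by move: rT'; rewrite rTe eqxx.
      by exists j => //; rewrite tj jr.
    move=> [j _]; case: ifPn => [/andP[tj jr] Ajw|]; last by [].
    apply/nu'P; exists j; split => //; apply/orP; right.
    by rewrite tj (leq_trans jr rT) /=; apply/asboolP.
  move=> w; rewrite /nu'; case: ex_minnP => m /orP[/eqP ->|/and3P[]//] _.
  exact: ltnW.
apply: filterS aenu => w tnu.
have [tauw|tauw] := leqP (tau w) t.
  rewrite (@pay_Y nu); last exact: leq_trans tauw tnu.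
  rewrite (@pay_Y nu') //.
  rewrite /nu'; case: ex_minnP => m /orP[/eqP ->|/and3P[tm _ _]] _.
    exact: tauT.
  exact: leq_trans tauw tm.
have [nutau|taunu] := ltnP (nu w) (tau w).
  rewrite /payoff; suff -> : nu' w = nu w by [].
  apply/eqP; rewrite eqn_leq; apply/andP; split.
    apply/nu'P; exists (nu w); split => //; apply/orP; right.
    rewrite tnu nuT /=; apply/asboolP; exact/(key w (nu w) tnu nutau).
  rewrite /nu'; case: ex_minnP => m /orP[/eqP ->|/and3P[tm mT /asboolP Am]] _.
    exact: nuT.
  rewrite leqNgt; apply/negP => mnu.
  have : (nu w <= m)%N by apply/(key w m tm (ltn_trans mnu nutau)).
  by rewrite leqNgt mnu.
rewrite (@pay_Y nu) // (@pay_Y nu') //.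
rewrite /nu'; case: ex_minnP => m /orP[/eqP ->|/and3P[tm mT /asboolP Am]] _.
  exact: tauT.
rewrite leqNgt; apply/negP => mtau'.
have : (nu w <= m)%N by apply/(key w m tm mtau').
by rewrite leqNgt (leq_trans mtau' taunu).
Qed.

Lemma tT : (t <= T)%N. Proof. exact: ltnW. Qed.

Local Notation B := [set w | (t < tau w)%N].
Local Notation Bc := [set w | (tau w <= t)%N].

Lemma sHt : sigma_algebra setT (Hp t). Proof. exact: PE_sa. Qed.

Lemma HBc : Hp t Bc. Proof. exact: PE_tau. Qed.

Lemma HB : Hp t B.
Proof.
rewrite (_ : B = ~` Bc); first (have := saC sHt HBc; exact).
by apply/seteqP; split => w /=; rewrite ltnNge => /negP.
Qed.

Lemma HtI A1 A2 : Hp t A1 -> Hp t A2 -> Hp t (A1 `&` A2).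
Proof. by move=> a b; have := saI sHt a b; exact. Qed.

Lemma HtM : Hp t `<=` measurable. Proof. exact: HpM tT. Qed.

Lemma Ig0 S : Ig P S (fun _ => 0) = 0.
Proof. by rewrite /Ig integral0. Qed.

Lemma Klem nu nuh : good t nu -> good t nuh -> OPT t nuh -> forall A, Hp t A ->
  Ig P A (payoff X Y tau nu) <= Ig P A (payoff X Y tau nuh).
Proof.
move=> [sn gn] [sh gh] Oh A HA.
have [A' [GA' eA]] := PE_struct (sGs tT) HA.
have ih := Pint_B (st_int sh) (st_int sn).
have mA := HtM HA; have mA' := GM tT GA'; have mB := HtM HB.
have z S : measurable S ->
    Ig P S (payoff X Y tau nuh \- payoff X Y tau nu) =
    Ig P (S `&` B) (payoff X Y tau nuh \- payoff X Y tau nu).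
  move=> mS; rewrite (Ig_split mS mB ih).
  suff -> : Ig P (S `\` B) (payoff X Y tau nuh \- payoff X Y tau nu) = 0 by rewrite addr0.
  rewrite -(Ig0 (S `\` B)); apply: Ig_ext => x [_ nBx].
  have tx : (tau x <= t)%N by rewrite leqNgt; apply/negP.
  by rewrite /= (@pay_Y nuh) ?(@pay_Y nu) ?subrr //;
    [exact: leq_trans tx (gn x)|exact: leq_trans tx (gh x)].
have : 0 <= Ig P A (payoff X Y tau nuh \- payoff X Y tau nu).
  rewrite z // eA -z // Ig_B // ?subr_ge0; last 2 first.
  - exact: st_int sh.
  - exact: st_int sn.
  exact: Oh.
by rewrite Ig_B // ?subr_ge0 //; [exact: st_int sh|exact: st_int sn].
Qed.

Definition Yt w := Y (tau w) w * ((tau w <= t)%N)%:R.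

Lemma Hp_tau_eq s : (s <= t)%N -> Hp t [set w | tau w = s].
Proof.
apply: (sa_eq sHt) => r rt; exact: PE_tau.
Qed.

Lemma Yt_Hm : G_measurable (Hp t) Yt.
Proof.
pose idx w := if (tau w <= t)%N then tau w else t.+1.
pose g s w := if (s <= t)%N then Y s w else 0.
apply: (@Gm_piece _ _ _ _ idx g _ sHt).
  move=> w; rewrite /Yt /idx /g; have [h|h] := leqP (tau w) t.
    by rewrite h mulr1.
  by rewrite ltnn mulr0.
move=> s Y' mY'.
have [st|ts] := leqP s t.
  rewrite (_ : [set w | idx w = s] = [set w | tau w = s]); last first.
    apply/seteqP; split => w /=; rewrite /idx; case: ifPn => // h.
      by move=> e; move: st; rewrite -e ltnn.
    by move=> e; move: h; rewrite e st.
  apply: (saI sHt); first exact: Hp_tau_eq.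
  have -> : g s = Y s by apply/funext => w; rewrite /g st.
  apply: PE_G; have [_ +] := hG; move=> /(_ s t st tT); apply.
  by apply: (aY (leq_trans st tT)).
have -> : g s = fun=> 0 by apply/funext => w; rewrite /g leqNgt ts.
have hc : Hp t ((fun _ : Omega => (0:R)) @^-1` Y').
  have [Y0|nY0] := pselect (Y' 0).
    rewrite (_ : _ @^-1` _ = setT); first exact: saT sHt.
    by apply/seteqP; split.
  rewrite (_ : _ @^-1` _ = set0); first exact: sa0 sHt.
  by apply/seteqP; split.
apply: (saI sHt) => //.
have [e|ne] := eqVneq s t.+1.
  rewrite (_ : [set w | idx w = s] = B); first exact: HB.
  apply/seteqP; split => w /=; rewrite /idx e.
    by case: leqP => // h e'; move: h; rewrite e' ltnn.
  by move=> h; rewrite leqNgt h.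
rewrite (_ : [set w | idx w = s] = set0); first exact: sa0 sHt.
apply/seteqP; split => w //=; rewrite /idx; case: leqP => h e.
  by move: ts; rewrite -e ltnNge h.
by move: ne; rewrite -e eqxx.
Qed.

Lemma aeS2 (Q1 Q2 Q3 : Omega -> Prop) : (forall w, Q1 w -> Q2 w -> Q3 w) ->
  {ae P, forall w, Q1 w} -> {ae P, forall w, Q2 w} -> {ae P, forall w, Q3 w}.
Proof. by move=> h a b; apply: filterS2 h a b; exact: ae_filter_ringOfSetsType. Qed.

Lemma aeS (Q1 Q2 : Omega -> Prop) : (forall w, Q1 w -> Q2 w) ->
  {ae P, forall w, Q1 w} -> {ae P, forall w, Q2 w}.
Proof. by move=> h a; apply: filterS h a. Qed.

Lemma uniq_eq (H : set (set Omega)) (C : set Omega) (f g : Omega -> R) :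
  sigma_algebra setT H -> H `<=` measurable -> measurable C ->
  G_measurable H f -> G_measurable H g ->
  P.-integrable C (EFin \o f) -> P.-integrable C (EFin \o g) ->
  (forall A, H A -> (\int[P]_(x in A `&` C) (f x)%:E = \int[P]_(x in A `&` C) (g x)%:E)%E) ->
  {ae P, forall w, C w -> f w = g w}.
Proof.
move=> sH HM mC Hf Hg intf intg e.
have h1 : {ae P, forall w, C w -> f w <= g w}.
  by apply: (uniq_le sH HM mC Hf Hg intf intg) => A HA; rewrite e.
have h2 : {ae P, forall w, C w -> g w <= f w}.
  by apply: (uniq_le sH HM mC Hg Hf intg intf) => A HA; rewrite e.
apply: (aeS2 _ h1 h2) => w a b Cw; by apply/le_anti; rewrite a ?b.
Qed.

Lemma iYt : Pint P Yt.
Proof.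
apply: (le_integrable measurableT _ _ iY).
  by apply/measurable_EFinP; exact: Gm_meas HtM Yt_Hm.
move=> w _ /=; rewrite lee_fin (@ger0_norm _ (maxabs T Y w)); last exact: maxabs_ge0.
rewrite /Yt; case: leqP => _; last by rewrite mulr0 normr0 maxabs_ge0.
by rewrite mulr1; exact: maxabs_ge (tauT w).
Qed.

Lemma LBc nu V : stopping_time_from P T Hp t nu ->
  cond_exp_on P setT (Hp t) (payoff X Y tau nu) V ->
  {ae P, forall w, Bc w -> V w = Yt w}.
Proof.
move=> [snu aenu] [HV [iV eV]].
have mBc := HtM HBc.
apply: (uniq_eq sHt HtM mBc HV Yt_Hm).
- exact: integrableS iV.
- exact: integrableS iYt.
move=> A HA.
have HABc : Hp t (A `&` Bc) by exact: HtI HA HBc.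
have := eV _ HABc; rewrite setIT => ->.
apply: ae_eq_integral.
- exact: HtM.
- by apply: measurable_funTS; apply/measurable_EFinP; exact: Hp_meas.
- by apply: measurable_funTS; apply/measurable_EFinP; exact: Gm_meas HtM Yt_Hm.
apply: filterS aenu => w tnu [_ tw].
by rewrite /Yt /= tw mulr1 pay_Y //; exact: leq_trans tw tnu.
Qed.

Lemma LB nu V1 V2 :
  cond_exp_on P setT (Hp t) (payoff X Y tau nu) V1 ->
  cond_exp_on P B (G t) (payoff X Y tau nu) V2 ->
  {ae P, forall w, B w -> V1 w = V2 w}.
Proof.
move=> [HV1 [iV1 eV1]] [GV2 [iV2 eV2]].
have mB := HtM HB.
apply: (uniq_eq sHt HtM mB HV1 (Gm_sub (@PE_G _ _ G tau t) GV2)).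
- exact: integrableS iV1.
- exact: iV2.
move=> A HA; have [A' [GA' eA]] := PE_struct (sGs tT) HA.
rewrite eA (eV2 _ GA').
have := eV1 (A' `&` B) (HtI (PE_G GA') HB).
by rewrite setIT.
Qed.

Lemma stf_G_Hp nu : stopping_time_from P T G t nu -> stopping_time_from P T Hp t nu.
Proof. by case=> snu aenu; split => //; exact: G_Hp. Qed.

Lemma good_stf nu : good t nu -> stopping_time_from P T G t nu.
Proof. by case=> snu gnu; split => //; exact: aeW. Qed.

Lemma V1_conv nu nu' V V' :
  stopping_time_from P T Hp t nu -> stopping_time T G nu' ->
  {ae P, forall w, payoff X Y tau nu w = payoff X Y tau nu' w} ->
  cond_exp_on P setT (Hp t) (payoff X Y tau nu) V ->
  cond_exp_on P setT (Hp t) (payoff X Y tau nu') V' ->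
  forall A, Hp t A ->
  (\int[P]_(x in A `&` setT) (V x)%:E = \int[P]_(x in A `&` setT) (V' x)%:E)%E.
Proof.
move=> [snu _] snu' aeq [HV [iV eV]] [HV' [iV' eV']] A HA.
rewrite eV // eV' //.
apply: ae_eq_integral.
- by rewrite setIT; exact: HtM.
- by apply: measurable_funTS; apply/measurable_EFinP; exact: Hp_meas.
- by apply: measurable_funTS; apply/measurable_EFinP; apply: Hp_meas; exact: G_Hp.
by apply: aeS aeq => w -> _.
Qed.

Theorem main_result :
  exists nuhat : Omega -> nat,
    stopping_time_from P T G t nuhat /\
    forall (W : Omega -> R)
           (V1 : (Omega -> nat) -> Omega -> R) (S1 : Omega -> \bar R)
           (V2 : (Omega -> nat) -> Omega -> R) (S2 : Omega -> \bar R),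
      cond_exp_on P setT (progressive_enlargement G tau t) (payoff X Y tau nuhat) W ->
      (forall nu, stopping_time_from P T (progressive_enlargement G tau) t nu ->
         cond_exp_on P setT (progressive_enlargement G tau t) (payoff X Y tau nu) (V1 nu)) ->
      ess_sup_on P setT
        [set EFin \o V1 nu | nu in stopping_time_from P T (progressive_enlargement G tau) t] S1 ->
      (forall nu, stopping_time_from P T G t nu ->
         cond_exp_on P [set w | (t < tau w)%N] (G t) (payoff X Y tau nu) (V2 nu)) ->
      ess_sup_on P [set w | (t < tau w)%N]
        [set EFin \o V2 nu | nu in stopping_time_from P T G t] S2 ->
      {ae P, forall w, (W w)%:E = S1 w} /\
      {ae P, forall w, S1 w =
         ((Y (tau w) w * ((tau w <= t)%N)%:R)%:E +
          ((t < tau w)%N)%:R%:E * S2 w)%E}.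
Proof.
have := backward (leq_subr t T); rewrite subKn ?tT // => -[nuh [gnh Onh]].
exists nuh; split; first exact: good_stf.
move=> W V1 S1 V2 S2 hW hV1 [mS1 [ubS1 lubS1]] hV2 [mS2 [ubS2 lubS2]].
have nuhH : stopping_time_from P T Hp t nuh by apply: stf_G_Hp; exact: good_stf.
have [HW [iW eW]] := hW.
have aW1 : {ae P, forall w, setT w -> W w = V1 nuh w}.
  have [HV [iV eV]] := hV1 _ nuhH.
  by apply: (uniq_eq sHt HtM measurableT HW HV iW iV) => A HA; rewrite eW // eV.
have step2 nu : stopping_time_from P T Hp t nu -> {ae P, forall w, setT w -> V1 nu w <= W w}.
  move=> hnu; have [nu' [gnu' aeq]] := conv hnu.
  have [HV [iV eV]] := hV1 _ hnu.
  have hV' := hV1 _ (stf_G_Hp (good_stf gnu')).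
  apply: (uniq_le sHt HtM measurableT HV HW iV iW) => A HA.
  rewrite (V1_conv hnu gnu'.1 aeq (hV1 _ hnu) hV' HA).
  have [_ [_ eV']] := hV'.
  rewrite eV' // eW // setIT.
  rewrite !IgE //; [|exact: HtM|exact: st_int gnh.1|exact: HtM|exact: st_int gnu'.1].
  by rewrite lee_fin; apply: Klem.
have mW : measurable_fun setT (EFin \o W).
  by apply/measurable_EFinP; exact: Gm_meas HtM HW.
have S1W : {ae P, forall w, setT w -> (S1 w <= (EFin \o W) w)%E}.
  apply: (lubS1 (EFin \o W) mW) => V [nu hnu <-].
  by apply: aeS (step2 nu hnu) => w h Tw /=; rewrite lee_fin h.
have V1S1 := ubS1 (EFin \o V1 nuh) (ex_intro2 _ _ nuh nuhH erefl).
split.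
  apply: (aeS2 _ (aeS2 (fun w a b => conj a b) aW1 V1S1) S1W) => w [a b] c.
  apply/le_anti; rewrite c //= a // b //.
pose Rst w := ((Y (tau w) w * ((tau w <= t)%N)%:R)%:E +
  ((t < tau w)%N)%:R%:E * S2 w)%E.
have mInd : measurable_fun setT (fun w => (((t < tau w)%N)%:R)%:E : \bar R).
  apply/measurable_EFinP.
  rewrite (_ : (fun w => _) = \1_B); first exact: measurable_indic (HtM HB).
  apply/funext => w; rewrite indicE; case: (boolP (t < tau w)%N) => h.
    by rewrite mem_set.
  by rewrite memNset //; apply/negP.
have mRst : measurable_fun setT Rst.
  rewrite (_ : Rst = (EFin \o Yt) \+ ((fun w => (((t < tau w)%N)%:R)%:E) \* S2))%E //.
  apply: emeasurable_funD.
    by apply/measurable_EFinP; exact: Gm_meas HtM Yt_Hm.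
  exact: emeasurable_funM mInd mS2.
have RS1 : {ae P, forall w, setT w -> (S1 w <= Rst w)%E}.
  apply: (lubS1 Rst mRst) => V [nu hnu <-].
  have [nu' [gnu' aeq]] := conv hnu.
  have hnu'H := stf_G_Hp (good_stf gnu').
  have [HV [iV eV]] := hV1 _ hnu.
  have [HV' [iV' eV']] := hV1 _ hnu'H.
  have a1 : {ae P, forall w, setT w -> V1 nu w = V1 nu' w}.
    apply: (uniq_eq sHt HtM measurableT HV HV' iV iV').
    exact: (V1_conv hnu gnu'.1 aeq (hV1 _ hnu) (hV1 _ hnu'H)).
  have a2 := LB (hV1 _ hnu'H) (hV2 _ (good_stf gnu')).
  have a3 := ubS2 (EFin \o V2 nu') (ex_intro2 _ _ nu' (good_stf gnu') erefl).
  have a4 := LBc hnu (hV1 _ hnu).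
  apply: (aeS2 _ (aeS2 (fun w a b => conj a b) a1 a2) (aeS2 (fun w a b => conj a b) a3 a4)).
  move=> w [b1 b2] [b3 b4] _ /=; rewrite /Rst.
  have [h|h] := leqP (tau w) t.
    have z : ((false)%:R : R) = 0 by [].
    rewrite z mul0e adde0 (b4 h) /Yt h.
    by [].
  have z : ((false)%:R : R) = 0 by [].
  have o : ((true)%:R : R) = 1 by [].
  rewrite z o mulr0 add0e mul1e (b1 I) (b2 h); exact: b3 h.
have S2S1 : {ae P, forall w, B w -> (S2 w <= S1 w)%E}.
  apply: (lubS2 S1 mS1) => V [nu hnu <-].
  have hnuH := stf_G_Hp hnu.
  have a1 := LB (hV1 _ hnuH) (hV2 _ hnu).
  have a2 := ubS1 (EFin \o V1 nu) (ex_intro2 _ _ nu hnuH erefl).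
  by apply: (aeS2 _ a1 a2) => w b1 b2 Bw /=; rewrite -b1 //; exact: b2.
have YS1 : {ae P, forall w, Bc w -> ((Yt w)%:E <= S1 w)%E}.
  have a1 := LBc nuhH (hV1 _ nuhH).
  by apply: (aeS2 _ a1 V1S1) => w b1 b2 Bcw; rewrite -b1 //; exact: b2.
apply: (aeS2 _ RS1 (aeS2 (fun w a b => conj a b) S2S1 YS1)) => w c [b1 b2].
change (S1 w = Rst w); apply/le_anti; rewrite c //=; rewrite /Rst.
have [h|h] := leqP (tau w) t.
  have z : ((false)%:R : R) = 0 by [].
  by rewrite z mul0e adde0; have := b2 h; rewrite /Yt h.
have z : ((false)%:R : R) = 0 by [].
have o : ((true)%:R : R) = 1 by [].
by rewrite z o mulr0 add0e mul1e; exact: b1 h.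
Qed.

End main.


Unset Implicit Arguments. Set Strict Implicit.

Theorem theorem1 (d : measure_display) (Omega : measurableType d) (R : realType)
    (P : probability Omega R) (T : nat) (F G : nat -> set (set Omega))
    (X2 Y2 : nat -> Omega -> R) (tau : Omega -> nat) (t : nat) :
  (0 < T)%N ->
  filtration T F -> filtration T G ->
  (forall s, (s <= T)%N -> G s `<=` F s) ->
  adapted T G X2 -> adapted T G Y2 ->
  P.-integrable setT (EFin \o maxabs T X2) ->
  P.-integrable setT (EFin \o maxabs T Y2) ->
  stopping_time T F tau ->
  (t < T)%N ->
  exists nuhat : Omega -> nat,
    stopping_time_from P T G t nuhat /\
    forall (W : Omega -> R)
           (V1 : (Omega -> nat) -> Omega -> R) (S1 : Omega -> \bar R)
           (V2 : (Omega -> nat) -> Omega -> R) (S2 : Omega -> \bar R),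
      cond_exp_on P setT (progressive_enlargement G tau t) (payoff X2 Y2 tau nuhat) W ->
      (forall nu, stopping_time_from P T (progressive_enlargement G tau) t nu ->
         cond_exp_on P setT (progressive_enlargement G tau t) (payoff X2 Y2 tau nu) (V1 nu)) ->
      ess_sup_on P setT
        [set EFin \o V1 nu | nu in stopping_time_from P T (progressive_enlargement G tau) t] S1 ->
      (forall nu, stopping_time_from P T G t nu ->
         cond_exp_on P [set w | (t < tau w)%N] (G t) (payoff X2 Y2 tau nu) (V2 nu)) ->
      ess_sup_on P [set w | (t < tau w)%N]
        [set EFin \o V2 nu | nu in stopping_time_from P T G t] S2 ->
      {ae P, forall w, (W w)%:E = S1 w} /\
      {ae P, forall w, S1 w =
         ((Y2 (tau w) w * ((tau w <= t)%N)%:R)%:E +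
          ((t < tau w)%N)%:R%:E * S2 w)%E}.
Proof.
Proof.
move=> _ hF hG GF aX aY iX iY stau ht.
exact: (main_result hF hG aX aY iX iY stau ht).
Qed.
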